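(* Let $\mathbf{K}$ be an abstract elementary class with $\mathrm{LS}(\mathbf{K})=\aleph_0$ such that $\mathbf{K}_{\aleph_0}$ has amalgamation and no maximal models, and $\mathbf{K}$ is Galois-stable in $\aleph_0$. Assume $\mathbf{K}$ is categorical in $\aleph_0$ and saturative in $\aleph_0$. Then for every increasing continuous chain $\langle M_i:i\le\omega\rangle$ in $\mathbf{K}_{\aleph_0}$ there is an increasing continuous chain $\langle N_i:i\le\omega\rangle$ in $\mathbf{K}_{\aleph_0}$ such that: (1) for every $i<\omega$, $M_i$ is limit over $N_i$; (2) for every $i<\omega$, $N_{i+1}$ is limit over $N_i$; (3) $N_\omega=M_\omega$.
   Context: For $M_0\le_{\mathbf{K}} M_1$ in $\mathbf{K}_\lambda$: $M_1$ is universal over $M_0$ if every $N\in\mathbf{K}_\lambda$ with $M_0\le N$ embeds into $M_1$ over $M_0$. $M_1$ is limit over $M_0$ if there are a limit ordinal $\delta<\lambda^+$ and an increasing continuous chain $\langle N_i:i\le\delta\rangle$ in $\mathbf{K}_\lambda$ with $N_0=M_0$, $N_\delta=M_1$, and $N_{i+1}$ universal over $N_i$ for all $i<\delta$. $\mathbf{K}$ is saturative in $\lambda$ if for all $M_0\le M_1\le M_2$ in $\mathbf{K}_\lambda$, if $M_1$ is limit over $M_0$ then $M_2$ is limit over $M_0$. *)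

(* Defs.v *)
From mathcomp Require Import all_boot.
From Stdlib Require Import Relations.
Set Implicit Arguments. Unset Strict Implicit. Unset Printing Implicit Defensive.

Record vocab := Vocab {
  fsym : Type; farity : fsym -> nat;
  rsym : Type; rarity : rsym -> nat }.

Record structure (L : vocab) := Structure {
  carrier :> Type;
  fint : forall f : fsym L, ('I_(farity f) -> carrier) -> carrier;
  rint : forall r : rsym L, ('I_(rarity r) -> carrier) -> Prop }.

Definition is_embedding (L : vocab) (M N : structure L) (h : M -> N) : Prop :=
  (forall x y, h x = h y -> x = y) /\
  (forall (f : fsym L) (a : 'I_(farity f) -> M),
      h (@fint L M f a) = @fint L N f (fun k => h (a k))) /\
  (forall (r : rsym L) (a : 'I_(rarity r) -> M),
      @rint L M r a <-> @rint L N r (fun k => h (a k))).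

Definition is_iso (L : vocab) (M N : structure L) (h : M -> N) : Prop :=
  is_embedding h /\ (forall y, exists x, h x = y).

(** A class of structures together with its K-embeddings:
    kemb h  means  "h is an isomorphism of M onto h[M] and h[M] <=_K N". *)
Record AECdata (L : vocab) := AECData {
  inK : structure L -> Prop;
  kemb : forall M N : structure L, (M -> N) -> Prop }.

Definition well_order (I : Type) (lt : I -> I -> Prop) : Prop :=
  (forall i, ~ lt i i) /\
  (forall i j k, lt i j -> lt j k -> lt i k) /\
  (forall i j, lt i j \/ i = j \/ lt j i) /\
  well_founded lt.

Definition leo (I : Type) (lt : I -> I -> Prop) (i j : I) : Prop :=
  lt i j \/ i = j.

Definition is_chain (L : vocab) (K : AECdata L) (I : Type) (lt : I -> I -> Prop)
    (N : I -> structure L) (e : forall i j, N i -> N j) : Prop :=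
  (forall i j, leo lt i j -> @kemb L K (N i) (N j) (e i j)) /\
  (forall i (x : N i), e i i x = x) /\
  (forall i j k (x : N i), leo lt i j -> leo lt j k -> e j k (e i j x) = e i k x).

Definition AEC_axioms (L : vocab) (K : AECdata L) : Prop :=
  (forall (M N : structure L) (h : M -> N),
      @kemb L K M N h -> inK K M /\ inK K N /\ is_embedding h) /\
  (forall (M N : structure L) (h : M -> N), inK K M -> is_iso h -> inK K N) /\
  (forall (M N : structure L) (h : M -> N), inK K M -> is_iso h -> @kemb L K M N h) /\
  (forall (M N P : structure L) (h : M -> N) (g : N -> P),
      @kemb L K M N h -> @kemb L K N P g -> @kemb L K M P (fun x => g (h x))) /\
  (forall (M0 M1 M2 : structure L) (f : M0 -> M2) (g : M1 -> M2) (h : M0 -> M1),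
      @kemb L K M0 M2 f -> @kemb L K M1 M2 g -> (forall x, g (h x) = f x) ->
      @kemb L K M0 M1 h) /\
  (* Tarski-Vaught chain axioms: U is (isomorphic to) the union of the chain *)
  (forall (I : Type) (lt : I -> I -> Prop) (N : I -> structure L)
          (e : forall i j, N i -> N j),
      well_order lt -> inhabited I -> @is_chain L K I lt N e ->
      forall (U : structure L) (u : forall i, N i -> U),
        (forall i, is_embedding (u i)) ->
        (forall i j (x : N i), leo lt i j -> u j (e i j x) = u i x) ->
        (forall y : U, exists i (x : N i), u i x = y) ->
        inK K U /\ (forall i, @kemb L K (N i) U (u i)) /\
        (forall (P : structure L) (g : forall i, N i -> P) (h : U -> P),
            (forall i, @kemb L K (N i) P (g i)) ->
            (forall i (x : N i), h (u i x) = g i x) -> @kemb L K U P h)).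

(** LS(K) = aleph_0 (with the convention LS(K) >= |tau| + aleph_0). *)
Definition LS_is_aleph0 (L : vocab) (K : AECdata L) : Prop :=
  (exists c : fsym L -> nat, injective c) /\
  (exists c : rsym L -> nat, injective c) /\
  (forall (N : structure L) (A : N -> Prop), inK K N ->
     exists (M : structure L) (h : M -> N),
       @kemb L K M N h /\ (forall x, A x -> exists y, h y = x) /\
       exists c : M -> ({x : N | A x} + nat)%type, injective c).

Definition size_aleph0 (L : vocab) (M : structure L) : Prop :=
  exists g : nat -> M, bijective g.

Definition inK0 (L : vocab) (K : AECdata L) (M : structure L) : Prop :=
  inK K M /\ size_aleph0 M.

Definition universal_over (L : vocab) (K : AECdata L) (M0 M1 : structure L)
    (f : M0 -> M1) : Prop :=
  inK0 K M0 /\ inK0 K M1 /\ @kemb L K M0 M1 f /\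
  forall (N : structure L) (g : M0 -> N), inK0 K N -> @kemb L K M0 N g ->
    exists h : N -> M1, @kemb L K N M1 h /\ forall x, h (g x) = f x.

Definition limit_over (L : vocab) (K : AECdata L) (M0 M1 : structure L)
    (f : M0 -> M1) : Prop :=
  inK0 K M0 /\ inK0 K M1 /\ @kemb L K M0 M1 f /\
  exists (I : Type) (lt : I -> I -> Prop) (N : I -> structure L)
         (e : forall i j, N i -> N j) (b t : I) (al : M0 -> N b) (be : N t -> M1),
    (* I is (order-isomorphic to) delta + 1 for a countable limit ordinal delta;
       b is 0 and t is delta *)
    well_order lt /\ (exists c : I -> nat, injective c) /\
    (forall i, leo lt b i) /\ (forall i, leo lt i t) /\ b <> t /\
    (forall i, lt i t -> exists k, lt i k /\ lt k t) /\
    @is_chain L K I lt N e /\ (forall i, inK0 K (N i)) /\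
    (forall j, j <> b -> (forall i, lt i j -> exists k, lt i k /\ lt k j) ->
       forall x : N j, exists i (y : N i), lt i j /\ e i j y = x) /\
    (forall i s, lt i s -> (forall k, ~ (lt i k /\ lt k s)) ->
       universal_over K (e i s)) /\
    (* N_0 = M0 and N_delta = M1 (over the inclusion f) *)
    is_iso al /\ is_iso be /\ (forall x, be (e b t (al x)) = f x).

Definition amalgamation0 (L : vocab) (K : AECdata L) : Prop :=
  forall (M0 M1 M2 : structure L) (f1 : M0 -> M1) (f2 : M0 -> M2),
    inK0 K M0 -> inK0 K M1 -> inK0 K M2 ->
    @kemb L K M0 M1 f1 -> @kemb L K M0 M2 f2 ->
    exists (N : structure L) (g1 : M1 -> N) (g2 : M2 -> N),
      inK0 K N /\ @kemb L K M1 N g1 /\ @kemb L K M2 N g2 /\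
      forall x, g1 (f1 x) = g2 (f2 x).

Definition no_maximal0 (L : vocab) (K : AECdata L) : Prop :=
  forall M : structure L, inK0 K M ->
    exists (N : structure L) (h : M -> N),
      inK0 K N /\ @kemb L K M N h /\ exists y : N, forall x, h x <> y.

Definition categorical0 (L : vocab) (K : AECdata L) : Prop :=
  (exists M, inK0 K M) /\
  forall M N : structure L, inK0 K M -> inK0 K N -> exists h : M -> N, is_iso h.

Definition saturative0 (L : vocab) (K : AECdata L) : Prop :=
  forall (M0 M1 M2 : structure L) (f : M0 -> M1) (g : M1 -> M2),
    inK0 K M2 -> @kemb L K M1 M2 g -> limit_over K f ->
    limit_over K (fun x => g (f x)).

Record gtriple (L : vocab) (M : structure L) := GTriple {
  gN : structure L; gf : M -> gN; ga : gN }.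

Definition gvalid (L : vocab) (K : AECdata L) (M : structure L) (p : gtriple M) : Prop :=
  inK0 K (gN p) /\ @kemb L K M (gN p) (gf p).

Definition Eat (L : vocab) (K : AECdata L) (M : structure L) (p q : gtriple M) : Prop :=
  gvalid K p /\ gvalid K q /\
  exists (N : structure L) (g1 : gN p -> N) (g2 : gN q -> N),
    inK0 K N /\ @kemb L K (gN p) N g1 /\ @kemb L K (gN q) N g2 /\
    (forall x, g1 (gf p x) = g2 (gf q x)) /\ g1 (ga p) = g2 (ga q).

(** |gS(M)| <= aleph_0 for every M in K_{aleph_0}; Galois-type equality is
    the transitive closure of E_at. *)
Definition stable0 (L : vocab) (K : AECdata L) : Prop :=
  forall M : structure L, inK0 K M ->
    exists T : nat -> gtriple M, (forall n, gvalid K (T n)) /\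
      forall p : gtriple M, gvalid K p -> exists n, clos_trans _ (@Eat L K M) p (T n).

Definition omega_chain (L : vocab) (K : AECdata L) (M : nat -> structure L)
    (s : forall i, M i -> M i.+1) (Mw : structure L) (m : forall i, M i -> Mw) : Prop :=
  (forall i, inK0 K (M i)) /\ inK0 K Mw /\
  (forall i, @kemb L K (M i) (M i.+1) (s i)) /\
  (forall i, @kemb L K (M i) Mw (m i)) /\
  (forall i (x : M i), m i.+1 (s i x) = m i x) /\
  (forall y : Mw, exists i (x : M i), m i x = y).

(* Main.v *)
Require Import Defs.
From mathcomp Require Import all_boot.
From mathcomp Require Import boolp classical_sets functions cardinality.
From Stdlib Require Import PeanoNat Eqdep_dec Wf_nat Lia Relations Classical_Prop.
From mathcomp Require Import zify.
Set Implicit Arguments. Unset Strict Implicit. Unset Printing Implicit Defensive.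

Section CB.
Local Open Scope classical_set_scope.
Lemma cnt_bij (T : Type) (c : T -> nat) (d : nat -> T) :
  injective c -> injective d -> exists g : nat -> T, bijective g.
Proof.
move=> ic id.
have h1 : countable [set: T].
  by apply/countable_injP; exists c => x y _ _; apply: ic.
have h2 : infinite_set [set: T].
  apply/infiniteP.
  have := @card_ge_preimage nat T [set: T] d (fun x y _ _ => id x y).
  by rewrite preimage_setT.
have /card_bijP[f [f' fK f'K]] := eq_card_nat h1 h2.
have ET : forall (u : [set: T]), SigSub (mem_set (I : [set: T] (val u))) = u.
  by move=> u; apply: val_inj.
have EN : forall (u : [set: nat]), SigSub (mem_set (I : [set: nat] (val u))) = u.
  by move=> u; apply: val_inj.
exists (fun n => val (f' (SigSub (mem_set (I : [set: nat] n))))).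
exists (fun t => val (f (SigSub (mem_set (I : [set: T] t))))).
  by move=> n /=; rewrite ET f'K.
by move=> t /=; rewrite EN fK.
Qed.
End CB.

Lemma wo_nat : well_order (fun i j : nat => i < j).
Proof.
split; first by move=> i; rewrite ltnn.
split; first by move=> i j k; apply: ltn_trans.
split; first by move=> i j; case: (ltngtP i j) => H; auto.
by apply: (@well_founded_lt_compat nat id) => x y /ltP.
Qed.

Lemma dep_seq (A : nat -> Type) (P : forall n, A n -> Prop)
  (R : forall n, A n -> A n.+1 -> Prop) :
  (exists a, P 0 a) -> (forall n a, P n a -> exists b, P n.+1 b /\ R n a b) ->
  exists f : forall n, A n, forall n, P n (f n) /\ R n (f n) (f n.+1).
Proof.
move=> /cid [a0 H0] Hs.
pose st n (a : {a : A n | P n a}) : {b : A n.+1 | P n.+1 b /\ R n (sval a) b} :=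
  cid (Hs n (sval a) (svalP a)).
pose fix fs n : {a : A n | P n a} :=
  match n with 0 => exist _ a0 H0
  | n'.+1 => exist _ (sval (st n' (fs n'))) (proj1 (svalP (st n' (fs n')))) end.
exists (fun n => sval (fs n)) => n; split; first exact: svalP.
exact: (proj2 (svalP (st n (fs n)))).
Qed.

Lemma dchoice (T : nat -> Type) (Rel : forall n, T n -> Prop) :
  (forall n, exists t, Rel n t) -> exists f : forall n, T n, forall n, Rel n (f n).
Proof. by move=> H; exists (fun n => sval (cid (H n))) => n; exact: svalP. Qed.

Section AEC.
Variables (L : vocab) (K : AECdata L) (HK : AEC_axioms K).

Lemma kembP (M N : structure L) (h : M -> N) :
  kemb K h -> inK K M /\ inK K N /\ is_embedding h.
Proof. by move: HK; rewrite /AEC_axioms; case=> H _; apply: H. Qed.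

Lemma kemb_emb (M N : structure L) (h : M -> N) : kemb K h -> is_embedding h.
Proof. by move/kembP => [_ [_ H]]. Qed.

Lemma kemb_inj (M N : structure L) (h : M -> N) : kemb K h -> injective h.
Proof. by case/kemb_emb. Qed.

Lemma iso_kemb (M N : structure L) (h : M -> N) : inK K M -> is_iso h -> kemb K h.
Proof. by move: HK; rewrite /AEC_axioms; case=> _ [_ [H _]]; apply: H. Qed.

Lemma iso_inK (M N : structure L) (h : M -> N) : inK K M -> is_iso h -> inK K N.
Proof. by move: HK; rewrite /AEC_axioms; case=> _ [H _]; apply: H. Qed.

Lemma kemb_comp (M N P : structure L) (h : M -> N) (g : N -> P) :
  kemb K h -> kemb K g -> kemb K (fun x => g (h x)).
Proof. by move: HK; rewrite /AEC_axioms; case=> _ [_ [_ [H _]]]; apply: H. Qed.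

Lemma coh (M0 M1 M2 : structure L) (f : M0 -> M2) (g : M1 -> M2) (h : M0 -> M1) :
  kemb K f -> kemb K g -> (forall x, g (h x) = f x) -> kemb K h.
Proof. by move: HK; rewrite /AEC_axioms; case=> _ [_ [_ [_ [H _]]]]; apply: H. Qed.

Lemma iso_id (M : structure L) : is_iso (fun x : M => x).
Proof. by split; [split; [|split] | move=> y; exists y]. Qed.

Lemma iso_comp (M N P : structure L) (h : M -> N) (g : N -> P) :
  is_iso h -> is_iso g -> is_iso (fun x => g (h x)).
Proof.
move=> [[ih [fh rh]] sh] [[ig [fg rg]] sg]; split; [split; [|split]|].
- by move=> x y /ig /ih.
- by move=> f a; rewrite fh fg.
- by move=> r a; apply: iff_trans (rh r a) _; apply: rg.
- by move=> y; have [z <-] := sg y; have [x <-] := sh z; exists x.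
Qed.

Lemma kemb_id (M : structure L) : inK K M -> kemb K (fun x : M => x).
Proof. by move=> H; apply: iso_kemb H (iso_id M). Qed.

Lemma kemb_ext (M N : structure L) (h g : M -> N) :
  (forall x, h x = g x) -> kemb K h -> kemb K g.
Proof. by move=> E; have -> : h = g by apply: funext. Qed.

Lemma union_ax : forall (I : Type) (lt : I -> I -> Prop) (N : I -> structure L)
          (e : forall i j, N i -> N j),
      well_order lt -> inhabited I -> is_chain K lt e ->
      forall (U : structure L) (u : forall i, N i -> U),
        (forall i, is_embedding (u i)) ->
        (forall i j (x : N i), leo lt i j -> u j (e i j x) = u i x) ->
        (forall y : U, exists i (x : N i), u i x = y) ->
        inK K U /\ (forall i, kemb K (u i)) /\
        (forall (P : structure L) (g : forall i, N i -> P) (h : U -> P),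
            (forall i, kemb K (g i)) ->
            (forall i (x : N i), h (u i x) = g i x) -> kemb K h).
Proof. by move: HK; rewrite /AEC_axioms; case=> _ [_ [_ [_ [_ H]]]]; exact: H. Qed.

Section Union.
Variables (Q : nat -> structure L) (q : forall i, Q i -> Q i.+1).
Local Unset Implicit Arguments.
Hypothesis hQ : forall i, inK0 K (Q i).
Hypothesis hq : forall i, kemb K (@q i).

Let qemb i : is_embedding (@q i) := kemb_emb (hq i).

Definition SQ := {i : nat & Q i}.
Notation mk i x := (@existT nat (fun j => carrier (Q j)) i x).
Definition stp (p : SQ) : SQ := mk (projT1 p).+1 (q (projT2 p)).

Fixpoint liftf i d : Q i -> Q (d + i) :=
  match d return Q i -> Q (d + i) with
  | 0 => fun x => x
  | d'.+1 => fun x => @q _ (@liftf i d' x) end.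

Lemma iter_stp d i x : iter d stp (mk i x) = mk (d + i) (liftf i d x).
Proof. by elim: d => //= d ->. Qed.

Lemma existT_inj i (x y : Q i) : mk i x = mk i y -> x = y.
Proof. exact: (@inj_pair2_eq_dec nat Nat.eq_dec (fun i => Q i) i x y). Qed.

Lemma stp_inj : injective stp.
Proof.
move=> [i x] [j y]; rewrite /stp /= => E.
have Eij : i = j by move/(f_equal (@projT1 _ _)): E => /= [].
subst j; have E2 := existT_inj _ _ _ E.
by rewrite (proj1 (qemb i) _ _ E2).
Qed.

Definition canon (p : SQ) := forall p0, stp p0 <> p.

Lemma root_ex p : exists c, canon c /\ exists d, iter d stp c = p.
Proof.
case: p => i; elim: i => [|i IH] x.
  by exists (mk 0 x); split; [move=> [j y] /(f_equal (@projT1 _ _))|exists 0].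
case: (pselect (exists y, q y = x)) => [[y <-]|nE].
  have [c [Hc [d Hd]]] := IH y.
  by exists c; split=> //; exists d.+1; rewrite iterS Hd.
exists (mk i.+1 x); split; last by exists 0.
move=> [j y] E.
have Eij : j = i by move/(f_equal (@projT1 _ _)): E => /= [[]].
subst j; apply: nE; exists y; exact: existT_inj E.
Qed.

Lemma root_uniq c c' d d' : canon c -> canon c' ->
  iter d stp c = iter d' stp c' -> c = c'.
Proof.
elim: d d' => [|d IH] [|d'] //= Hc Hc'; rewrite ?iterS.
- by move=> E; case: (Hc _ (esym E)).
- by move=> E; case: (Hc' _ E).
- by move/stp_inj; apply: IH.
Qed.

Definition UT := {p : SQ | canon p}.

Lemma Ueq (x y : UT) : sval x = sval y -> x = y.
Proof. by case: x => x hx; case: y => y hy /= E; subst y; congr exist; apply: Prop_irrelevance. Qed.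

Definition rootc (p : SQ) : SQ := sval (cid (root_ex p)).
Lemma rootc_spec p : canon (rootc p) /\ exists d, iter d stp (rootc p) = p.
Proof. exact: svalP (cid (root_ex p)). Qed.
Definition root p : UT := exist _ (rootc p) (proj1 (rootc_spec p)).

Lemma rootc_eq c d p : canon c -> iter d stp c = p -> rootc p = c.
Proof.
have [Hr [d' E']] := rootc_spec p => Hc E.
by apply: (root_uniq _ _ d' d Hr Hc); rewrite E E'.
Qed.

Lemma root_iter d p : root (iter d stp p) = root p.
Proof.
apply: Ueq => /=; have [Hr [a Ea]] := rootc_spec p.
by apply: (rootc_eq _ (d + a) _ Hr); rewrite iterD Ea.
Qed.

Lemma stage_iter d p : projT1 (iter d stp p) = d + projT1 p.
Proof. by elim: d => //= d ->. Qed.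

Lemma root_lift p p' d d' : root p = root p' -> d + projT1 p = d' + projT1 p' ->
  iter d stp p = iter d' stp p'.
Proof.
move=> E Es; have [Hr [a Ea]] := rootc_spec p; have [Hr' [a' Ea']] := rootc_spec p'.
have Ec : rootc p = rootc p' by move/(f_equal (@sval _ _)): E.
move: Es; rewrite -Ea -Ea' -!iterD Ec !stage_iter => Es.
by have -> : d + a = d' + a' by lia.
Qed.

Definition uu i (x : Q i) : UT := root (mk i x).

Lemma uu_stp i x : uu i.+1 (q x) = uu i x.
Proof. exact: (root_iter 1 (mk i x)). Qed.

Lemma uu_lift i d x : uu _ (liftf i d x) = uu i x.
Proof. by rewrite /uu -iter_stp root_iter. Qed.

Lemma uu_inj i : injective (uu i).
Proof.
move=> x y E; have := root_lift _ _ 0 0 E erefl.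
by move/existT_inj.
Qed.

Lemma uu_surj y : exists i x, uu i x = y.
Proof.
case: y => [[i x] Hc]; exists i, x; apply: Ueq => /=.
exact: (rootc_eq _ 0 _ Hc).
Qed.

Lemma uu_up i j (x : Q i) : i <= j -> exists y, uu j y = uu i x.
Proof. by move=> H; rewrite -(subnK H); exists (liftf i (j - i) x); apply: uu_lift. Qed.

Lemma uu_eq_lift i j (x : Q i) (y : Q j) : uu j y = uu i x ->
  mk (i + j) (liftf j i y) = mk (j + i) (liftf i j x).
Proof. by move=> E; rewrite -!iter_stp; apply: root_lift => //=; rewrite addnC. Qed.

Lemma liftf_fint i d f (a : 'I_(farity f) -> Q i) :
  liftf i d (fint a) = fint (fun k => liftf i d (a k)).
Proof. by elim: d => //= d ->; apply: (proj1 (proj2 (qemb _))). Qed.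

Lemma liftf_rint i d r (a : 'I_(rarity r) -> Q i) :
  rint a <-> rint (fun k => liftf i d (a k)).
Proof.
elim: d => [|d IH] //=; apply: iff_trans IH _.
exact: (proj2 (proj2 (qemb _))).
Qed.

Lemma existT_tup m m' (E : m = m') n (a : 'I_n -> Q m) (b : 'I_n -> Q m') :
  (forall k, mk m (a k) = mk m' (b k)) ->
  existT (fun i => 'I_n -> Q i) m a = existT _ m' b.
Proof.
subst m' => H; have -> // : a = b.
by apply: funext => k; apply: existT_inj.
Qed.

Lemma existT_tinj m n (a b : 'I_n -> Q m) :
  existT (fun i => 'I_n -> Q i) m a = existT _ m b -> a = b.
Proof. exact: (@inj_pair2_eq_dec nat Nat.eq_dec (fun i => 'I_n -> Q i) m a b). Qed.

Lemma existT_fint m m' (E : m = m') f (a : 'I_(farity f) -> Q m) (b : 'I_(farity f) -> Q m') :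
  existT (fun i => 'I_(farity f) -> Q i) m a = existT _ m' b -> mk m (fint a) = mk m' (fint b).
Proof. by subst m' => /existT_tinj ->. Qed.

Lemma existT_rint m m' (E : m = m') r (a : 'I_(rarity r) -> Q m) (b : 'I_(rarity r) -> Q m') :
  existT (fun i => 'I_(rarity r) -> Q i) m a = existT _ m' b -> rint a <-> rint b.
Proof. by subst m' => /existT_tinj ->. Qed.

Lemma uu_fint_gen i j f (x : 'I_(farity f) -> Q i) (y : 'I_(farity f) -> Q j) :
  (forall k, uu j (y k) = uu i (x k)) -> uu j (fint y) = uu i (fint x).
Proof.
move=> H; rewrite -(uu_lift i j (fint x)) -(uu_lift j i (fint y)) /uu.
congr root; rewrite !liftf_fint.
apply: (existT_fint _ _ (addnC i j)).
exact: existT_tup _ _ (addnC i j) _ _ _ (fun k => uu_eq_lift _ _ _ _ (H k)).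
Qed.

Lemma uu_rint_gen i j r (x : 'I_(rarity r) -> Q i) (y : 'I_(rarity r) -> Q j) :
  (forall k, uu j (y k) = uu i (x k)) -> rint y <-> rint x.
Proof.
move=> H; apply: iff_trans (liftf_rint j i r y) _.
apply: iff_trans _ (iff_sym (liftf_rint i j r x)).
apply: (existT_rint _ _ (addnC i j)).
exact: existT_tup _ _ (addnC i j) _ _ _ (fun k => uu_eq_lift _ _ _ _ (H k)).
Qed.

Lemma tup_ex n (a : 'I_n -> UT) :
  exists p : {j : nat & 'I_n -> Q j}, forall k, uu _ (projT2 p k) = a k.
Proof.
have [iI HI] := @choice _ _ (fun k i => exists x : Q i, uu i x = a k) (fun k => uu_surj (a k)).
pose j := \max_(k < n) iI k.
have Hy : forall k, exists y : Q j, uu j y = a k.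
  move=> k; have [x Hx] := HI k.
  have [y Hy] := uu_up _ j x (@leq_bigmax _ (fun k => iI k) k).
  by exists y; rewrite Hy Hx.
have [y Hy'] := @choice _ _ (fun k (y : Q j) => uu j y = a k) Hy.
by exists (existT _ j y).
Qed.

Definition Ufint f (a : 'I_(farity f) -> UT) : UT :=
  let p := sval (cid (tup_ex _ a)) in uu _ (fint (projT2 p)).
Definition Urint r (a : 'I_(rarity r) -> UT) : Prop :=
  exists j (y : 'I_(rarity r) -> Q j), (forall k, uu j (y k) = a k) /\ rint y.
Definition UU : structure L := @Structure L UT Ufint Urint.

Lemma uu_emb i : is_embedding (uu i : Q i -> UU).
Proof.
split; first exact: uu_inj.
split.
- move=> f x /=; rewrite /Ufint.
  have Hp := svalP (cid (tup_ex _ (fun k => uu i (x k)))).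
  symmetry; exact: uu_fint_gen _ _ _ _ _ Hp.
- move=> r x; split => [Hr|[j [y [Hy Hr]]]]; first by exists i, x.
  exact/(uu_rint_gen _ _ _ _ _ Hy).
Qed.

Definition dflt i : Q i := sval (cid (proj2 (hQ i))) 0.
Definition ee i j (x : Q i) : Q j :=
  match pselect (exists y, uu j y = uu i x) with
  | left H => sval (cid H) | right _ => dflt j end.

Lemma ee_spec i j x : i <= j -> uu j (ee i j x) = uu i x.
Proof.
move=> Hij; rewrite /ee; case: pselect => [H|nH]; first exact: svalP (cid H).
by case: nH; apply: uu_up.
Qed.

Lemma ee_refl i x : ee i i x = x.
Proof. by apply: uu_inj; rewrite ee_spec. Qed.

Lemma ee_S i j x : i <= j -> ee i j.+1 x = q (ee i j x).
Proof. by move=> H; apply: uu_inj; rewrite uu_stp !ee_spec //; apply: leqW. Qed.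

Lemma ee_comp i j k x : i <= j -> j <= k -> ee j k (ee i j x) = ee i k x.
Proof. by move=> H1 H2; apply: uu_inj; rewrite !ee_spec //; apply: leq_trans H2. Qed.

Lemma ee_kemb i j : i <= j -> kemb K (ee i j).
Proof.
move=> H; rewrite -(subnK H); elim: (j - i) => [|d IH].
  apply: (@kemb_ext _ _ (fun x => x)); first by move=> x; rewrite ee_refl.
  by apply: kemb_id; case: (hQ i).
apply: (@kemb_ext _ _ (fun x => q (ee i (d + i) x))).
  by move=> x; rewrite (ee_S _ _ x (leq_addl d i)).
exact: kemb_comp IH (hq _).
Qed.

Lemma union_ex : exists (U : structure L) (u : forall i, Q i -> U),
  inK0 K U /\ (forall i, kemb K (u i)) /\ (forall i x, u i.+1 (q x) = u i x) /\
  (forall y, exists i x, u i x = y) /\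
  (forall i j (x : Q i), i <= j -> exists y, u j y = u i x) /\
  (forall (P : structure L) (g : forall i, Q i -> P), (forall i, kemb K (g i)) ->
     (forall i x, g i.+1 (q x) = g i x) ->
     exists h : U -> P, kemb K h /\ forall i x, h (u i x) = g i x).
Proof.
have chain : is_chain K (fun i j : nat => i < j) ee.
  split; first by move=> i j Hl; apply: ee_kemb; case: Hl => [/ltnW|->].
  split; first exact: ee_refl.
  by move=> i j k x H1 H2; apply: ee_comp; [case: H1 => [/ltnW|->]|case: H2 => [/ltnW|->]].
have Hemb : forall i, is_embedding (uu i : Q i -> UU) := uu_emb.
have Hcomp : forall i j (x : Q i), leo (fun i j : nat => i < j) i j ->
    (uu j (ee i j x) : UU) = uu i x.
  by move=> i j x Hl; apply: ee_spec; case: Hl => [/ltnW|->].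
have Hsurj : forall y : UU, exists i x, uu i x = y := uu_surj.
have [inU [kembu univ]] := union_ax wo_nat (inhabits 0) chain Hemb Hcomp Hsurj.
exists UU, uu; split.
  split=> //.
  have [C HC] : exists C : forall i, Q i -> nat, forall i, injective (C i).
    apply: (@dchoice (fun i => Q i -> nat) (fun i c => injective c)) => i; case: (hQ i) => _ [g [g' gK g'K]].
    by exists g'; apply: can_inj g'K.
  apply: (@cnt_bij UT (fun y => pickle (projT1 (sval y), C _ (projT2 (sval y))))
            (fun n => uu 0 (sval (cid (proj2 (hQ 0))) n))).
    move=> [[i x] hx] [[j y] hy] /= /(pcan_inj pickleK) E.
    have Eij : i = j by case: E.
    subst j; apply: Ueq => /=; congr existT; apply: (HC i).
    by case: E.
  move=> n m /uu_inj; apply: bij_inj.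
  exact: svalP (cid (proj2 (hQ 0))).
split=> //; split; first exact: uu_stp.
split; first exact: uu_surj.
split; first exact: uu_up.
move=> P g kg cg.
have gee : forall i j x, i <= j -> g j (ee i j x) = g i x.
  move=> i j x H; rewrite -(subnK H); elim: (j - i) => [|d IH]; first by rewrite ee_refl.
  by rewrite (ee_S _ _ x (leq_addl d i)) cg IH.
have hc : forall y : UU, {p : SQ | uu _ (projT2 p) = y}.
  by move=> y; apply: cid; have [i [x E]] := uu_surj y; exists (mk i x).
pose h (y : UU) : P := g _ (projT2 (sval (hc y))).
have hu : forall i x, h (uu i x) = g i x.
  move=> i x; rewrite /h; case: (hc (uu i x)) => [[j y] /= E].
  pose m := maxn i j.
  rewrite -(gee j m y (leq_maxr _ _)) -(gee i m x (leq_maxl _ _)).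
  congr (g m _); apply: uu_inj; rewrite !ee_spec ?leq_maxl ?leq_maxr //.
exists h; split=> //; exact: univ kg hu.
Qed.
End Union.
End AEC.

Section Main.
Variables (L : vocab) (K : AECdata L) (HK : AEC_axioms K) (HAP : amalgamation0 K)
  (Hstab : stable0 K) (Hcat : categorical0 K) (Hsat : saturative0 K).

Lemma Eat_trans (M : structure L) (p q r : gtriple M) :
  Eat K p q -> Eat K q r -> Eat K p r.
Proof.
move=> [vp [vq [N1 [g1 [g2 [iN1 [kg1 [kg2 [E1 Ea1]]]]]]]]].
move=> [_ [vr [N2 [h1 [h2 [iN2 [kh1 [kh2 [E2 Ea2]]]]]]]]].
have [R [k1 [k2 [iR [kk1 [kk2 Ek]]]]]] := HAP (proj1 vq) iN1 iN2 kg2 kh1.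
split=> //; split=> //.
exists R, (fun x => k1 (g1 x)), (fun x => k2 (h2 x)); split=> //.
split; first exact: (kemb_comp HK kg1 kk1).
split; first exact: (kemb_comp HK kh2 kk2).
split; first by move=> x; rewrite E1 Ek E2.
by rewrite Ea1 Ek Ea2.
Qed.

Lemma ct_Eat (M : structure L) (p q : gtriple M) :
  clos_trans _ (@Eat L K M) p q -> Eat K p q.
Proof. by elim=> // x y z _ H1 _ H2; apply: Eat_trans H1 H2. Qed.

Lemma Eat_mono (M : structure L) (p : gtriple M) (Z : structure L) (f : M -> Z) (c : Z)
  (W : structure L) (w : Z -> W) :
  Eat K p (GTriple f c) -> kemb K w -> inK0 K W ->
  Eat K p (GTriple (fun x => w (f x)) (w c)).
Proof.
move=> H kw iW; apply: (Eat_trans H).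
have [_ [[iZ kf] _]] := H.
split; first by split.
split; first by split=> //; exact: (kemb_comp HK kf kw).
exists W, w, (fun x => x); split=> //; split=> //.
split; first exact: (kemb_id HK (proj1 iW)).
by split.
Qed.

Lemma realize_all (X : structure L) : inK0 K X -> exists (Y : structure L) (f : X -> Y),
  inK0 K Y /\ kemb K f /\ forall p : gtriple X, gvalid K p -> exists c, Eat K p (GTriple f c).
Proof.
move=> iX; have [T [vT HT]] := Hstab iX.
pose A (n : nat) := {Z : structure L & X -> Z}.
pose P n (a : A n) := inK0 K (projT1 a) /\ kemb K (projT2 a) /\
      forall k, k < n -> exists c, Eat K (T k) (GTriple (projT2 a) c).
pose R n (a : A n) (b : A n.+1) := exists w : projT1 a -> projT1 b,
      kemb K w /\ forall x, w (projT2 a x) = projT2 b x.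
have H0 : exists a, P 0 a.
  exists (existT _ X (fun x => x)); split=> //; split=> //.
  exact: (kemb_id HK (proj1 iX)).
have Hs : forall n a, P n a -> exists b, P n.+1 b /\ R n a b.
  move=> n [Z f] /= [iZ [kf Hk]].
  have [vn1 vn2] := vT n.
  have [W [w1 [w2 [iW [kw1 [kw2 Ew]]]]]] := HAP iX iZ vn1 kf vn2.
  have {}Ew : forall x, w1 (f x) = w2 (gf (T n) x) := Ew.
  exists (existT _ W (fun x => w1 (f x))); split; last by exists w1.
  split=> //; split; first exact: (kemb_comp HK kf kw1).
  move=> k; rewrite ltnS leq_eqVlt => /orP [/eqP ->|/Hk [c Hc]]; last first.
    by exists (w1 c); exact: (Eat_mono Hc kw1 iW).
  exists (w2 (ga (T n))); split; first exact: (vT n).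
  split; first by split=> //; exact: (kemb_comp HK kf kw1).
  exists W, w2, (fun x => x); split=> //; split=> //.
  split; first exact: (kemb_id HK (proj1 iW)).
  by split=> // x /=; rewrite Ew.
have [F HF] := dep_seq H0 Hs.
have [w Hw] := @dchoice (fun n => projT1 (F n) -> projT1 (F n.+1))
  (fun n w => kemb K w /\ forall x, w (projT2 (F n) x) = projT2 (F n.+1) x)
  (fun n => proj2 (HF n)).
have [U [u [iU [ku [uc [us [uup uuniv]]]]]]] :=
  union_ex _ _ HK _ w (fun n => proj1 (proj1 (HF n))) (fun n => proj1 (Hw n)).
pose f x := u 0 (projT2 (F 0) x).
have uf : forall n x, u n (projT2 (F n) x) = f x.
  by elim=> // n IH x; rewrite -(proj2 (Hw n) x) uc IH.
exists U, f; split=> //; split.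
  exact: (kemb_comp HK (proj1 (proj2 (proj1 (HF 0)))) (ku 0)).
move=> p vp; have [k Hk] := HT p vp.
have [c Hc] := proj2 (proj2 (proj1 (HF k.+1))) k (ltnSn k).
exists (u k.+1 c); apply: (Eat_trans (ct_Eat Hk)).
have := Eat_mono Hc (ku k.+1) iU.
have -> // : (fun x => u k.+1 (projT2 (F k.+1) x)) = f.
by apply: funext => x; apply: uf.
Qed.

Lemma univ_ex (X : structure L) : inK0 K X ->
  exists (Y : structure L) (f : X -> Y), universal_over K f.
Proof.
move=> iX.
pose A (n : nat) := {Z : structure L & X -> Z}.
pose P n (a : A n) := inK0 K (projT1 a) /\ kemb K (projT2 a).
pose R n (a : A n) (b : A n.+1) := exists w : projT1 a -> projT1 b,
  kemb K w /\ (forall x, w (projT2 a x) = projT2 b x) /\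
  forall p : gtriple (projT1 a), gvalid K p -> exists c, Eat K p (GTriple w c).
have H0 : exists a, P 0 a.
  by exists (existT _ X (fun x => x)); split=> //; exact: (kemb_id HK (proj1 iX)).
have Hs : forall n a, P n a -> exists b, P n.+1 b /\ R n a b.
  move=> n [Z f] /= [iZ kf].
  have [Y [w [iY [kw Hw]]]] := realize_all iZ.
  exists (existT _ Y (fun x => w (f x))); split.
    by split=> //; exact: (kemb_comp HK kf kw).
  by exists w.
have [F HF] := dep_seq H0 Hs.
pose Xs n := projT1 (F n).
pose fX n : X -> Xs n := projT2 (F n).
have [w Hw] := @dchoice (fun n => Xs n -> Xs n.+1)
  (fun n w => kemb K w /\ (forall x, w (fX n x) = fX n.+1 x) /\
     forall p : gtriple (Xs n), gvalid K p -> exists c, Eat K p (GTriple w c))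
  (fun n => proj2 (HF n)).
have [U [u [iU [ku [uc [us [uup uuniv]]]]]]] :=
  union_ex _ _ HK _ w (fun n => proj1 (proj1 (HF n))) (fun n => proj1 (Hw n)).
pose f x := u 0 (fX 0 x).
have uf : forall n x, u n (fX n x) = f x.
  by elim=> // n IH x; rewrite -(proj1 (proj2 (Hw n)) x) uc IH.
have kfX : forall n, kemb K (fX n) := fun n => proj2 (proj1 (HF n)).
have iXs : forall n, inK0 K (Xs n) := fun n => proj1 (proj1 (HF n)).
exists U, f; split=> //; split=> //.
split; first exact: (kemb_comp HK (kfX 0) (ku 0)).
move=> N g iN kg.
have [a [a' aK a'K]] : exists a : nat -> N, bijective a by case: iN.
pose B (n : nat) := {Z : structure L & ((N -> Z) * (Xs n -> Z))%type}.
pose P' n (b : B n) := inK0 K (projT1 b) /\ kemb K (projT2 b).1 /\ kemb K (projT2 b).2 /\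
  (forall x, (projT2 b).2 (fX n x) = (projT2 b).1 (g x)) /\
  (forall j, j < n -> exists y, (projT2 b).2 y = (projT2 b).1 (a j)).
pose R' n (b : B n) (b' : B n.+1) := exists z : projT1 b -> projT1 b',
  kemb K z /\ (forall y, z ((projT2 b).1 y) = (projT2 b').1 y) /\
  (forall y, z ((projT2 b).2 y) = (projT2 b').2 (w n y)).
have H0' : exists b, P' 0 b.
  have [W [k1 [k2 [iW [kk1 [kk2 Ek]]]]]] := HAP iX iN (iXs 0) kg (kfX 0).
  exists (existT _ W (k1, k2)); split=> //; split=> //; split=> //.
  by split=> // x /=; rewrite Ek.
have Hs' : forall n b, P' n b -> exists b', P' n.+1 b' /\ R' n b b'.
  move=> n [Z [gg hh]] /= [iZ [kgg [khh [Eg Hcov]]]].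
  have {}Eg : forall x, hh (fX n x) = gg (g x) := Eg.
  have {}Hcov : forall j, j < n -> exists y, hh y = gg (a j) := Hcov.
  have vp : gvalid K (GTriple hh (gg (a n))) := conj iZ khh.
  have [c [_ [_ [Z2 [z1 [z2 [iZ2 [kz1 [kz2 [Ez Eza]]]]]]]]]] := proj2 (proj2 (Hw n)) _ vp.
  have {}Ez : forall x, z1 (hh x) = z2 (w n x) := Ez.
  have {}Eza : z1 (gg (a n)) = z2 c := Eza.
  exists (existT _ Z2 ((fun y => z1 (gg y)), z2)); split.
    split=> //; split; first exact: (kemb_comp HK kgg kz1).
    split=> //; split.
      by move=> x /=; rewrite -(proj1 (proj2 (Hw n)) x) -Ez Eg.
    move=> j; rewrite ltnS leq_eqVlt => /orP [/eqP ->|/Hcov [y Hy]].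
      by exists c; rewrite /= -Eza.
    by exists (w n y); rewrite /= -Ez Hy.
  by exists z1; split=> //; split=> // y; rewrite Ez.
have [G HG] := dep_seq H0' Hs'.
pose Zs n := projT1 (G n).
pose gg n : N -> Zs n := (projT2 (G n)).1.
pose hh n : Xs n -> Zs n := (projT2 (G n)).2.
have [z Hz] := @dchoice (fun n => Zs n -> Zs n.+1)
  (fun n z => kemb K z /\ (forall y, z (gg n y) = gg n.+1 y) /\
    (forall y, z (hh n y) = hh n.+1 (w n y)))
  (fun n => proj2 (HG n)).
have [V [v [iV [kv [vc [vs [vup vuniv]]]]]]] :=
  union_ex _ _ HK _ z (fun n => proj1 (proj1 (HG n))) (fun n => proj1 (Hz n)).
pose G0 y := v 0 (gg 0 y).
have vg : forall n y, v n (gg n y) = G0 y.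
  by elim=> // n IH y; rewrite -(proj1 (proj2 (Hz n)) y) vc IH.
have khh : forall n, kemb K (hh n) := fun n => proj1 (proj2 (proj2 (proj1 (HG n)))).
have kgg : forall n, kemb K (gg n) := fun n => proj1 (proj2 (proj1 (HG n))).
have [H [kH HH]] := uuniv V (fun n y => v n (hh n y))
   (fun n => kemb_comp HK (khh n) (kv n))
   (fun n y => etrans (congr1 (v n.+1) (esym (proj2 (proj2 (Hz n)) y))) (vc n _)).
have cover : forall y : N, exists x, H x = G0 y.
  move=> y; rewrite -(a'K y); set j := a' y.
  have [y0 Hy0] := proj2 (proj2 (proj2 (proj2 (proj1 (HG j.+1))))) j (ltnSn j).
  have {}Hy0 : hh j.+1 y0 = gg j.+1 (a j) := Hy0.
  by exists (u j.+1 y0); rewrite HH Hy0 vg.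
pose h y := sval (cid (cover y)).
have Hh : forall y, H (h y) = G0 y := fun y => svalP (cid (cover y)).
have kG0 : kemb K G0 := kemb_comp HK (kgg 0) (kv 0).
exists h; split; first exact: (coh HK kG0 kH Hh).
move=> x; apply: (kemb_inj HK kH); rewrite Hh /G0 /f HH.
have E0 : forall x, hh 0 (fX 0 x) = gg 0 (g x) :=
  proj1 (proj2 (proj2 (proj2 (proj1 (HG 0))))).
by rewrite E0.
Qed.

End Main.

Section Main.
Variables (L : vocab) (K : AECdata L) (HK : AEC_axioms K) (HAP : amalgamation0 K)
  (Hstab : stable0 K) (Hcat : categorical0 K) (Hsat : saturative0 K).

Definition ltI (i j : option nat) : Prop :=
  match i, j with Some a, Some b => a < b | Some _, None => True | None, _ => False end.

Lemma wo_ltI : well_order ltI.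
Proof.
split; first by case=> [a|] //=; rewrite ltnn.
split; first by move=> [a|] [b|] [c|] //=; apply: ltn_trans.
split.
  move=> [a|] [b|] /=.
  - case: (ltngtP a b) => H; [by left|by right; right|by right; left; rewrite H].
  - by left.
  - by right; right.
  - by right; left.
have AS : forall k, Acc ltI (Some k).
  elim/ltn_ind => k IH; constructor; case=> [j|] /= Hj; [exact: IH | case: Hj].
case=> [k|]; first exact: AS.
by constructor; case=> [j|] /= Hj; [exact: AS | case: Hj].
Qed.

Lemma limit_ex : exists (X Y : structure L) (f : X -> Y), limit_over K f.
Proof.
have [[X0 iX0] _] := Hcat.
pose P (n : nat) (Z : structure L) := inK0 K Z.
pose R (n : nat) (Z Z' : structure L) := exists w : Z -> Z', universal_over K w.
have H0 : exists Z, P 0 Z by exists X0.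
have Hs : forall n Z, P n Z -> exists Z', P n.+1 Z' /\ R n Z Z'.
  move=> n Z iZ; have [Y [w Hw]] := univ_ex HK HAP Hstab iZ.
  by exists Y; split; [exact: (proj1 (proj2 Hw)) | exists w].
have [F HF] := @dep_seq (fun _ => structure L) P R H0 Hs.
have [w Hw] := @dchoice (fun n => F n -> F n.+1) (fun n w => universal_over K w)
  (fun n => proj2 (HF n)).
have iF : forall n, inK0 K (F n) := fun n => proj1 (HF n).
have kw : forall n, kemb K (w n) := fun n => proj1 (proj2 (proj2 (Hw n))).
have [U [u [iU [ku [uc [us [uup uuniv]]]]]]] := union_ex _ _ HK _ w iF kw.
exists (F 0), U, (u 0).
split; first exact: iF.
split; first exact: iU.
split; first exact: ku.
pose N (i : option nat) : structure L := if i is Some k then F k else U.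
pose uo := fun i => match i return N i -> U with Some k => u k | None => fun x => x end.
pose dflt := fun i => match i return N i with
  | Some k => sval (cid (proj2 (iF k))) 0 | None => u 0 (sval (cid (proj2 (iF 0))) 0) end.
pose e (i j : option nat) (x : N i) : N j :=
  match pselect (exists y : N j, uo j y = uo i x) with
  | left H => sval (cid H) | right _ => dflt j end.
have Hl : forall i j, leo ltI i j -> forall x, exists y : N j, uo j y = uo i x.
  move=> [a|] [b|] //= [] //=.
  - by move=> Hab x; apply: uup; apply: ltnW.
  - by case=> -> x; exists x.
  - by move=> _ x; exists (u a x).
  - by move=> _ x; exists x.
have espec : forall i j x, leo ltI i j -> uo j (e i j x) = uo i x.
  move=> i j x H; rewrite /e; case: pselect => [H'|nH]; first exact: (svalP (cid H')).
  by case: nH; apply: Hl.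
have uo_inj : forall i, injective (uo i).
  by case=> [k|] //=; apply: (kemb_inj HK (ku k)).
have kuo : forall i, kemb K (uo i).
  by case=> [k|] //=; apply: (kemb_id HK (proj1 iU)).
have leo_refl : forall i, leo ltI i i by move=> i; right.
exists (option nat), ltI, N, e, (Some 0), None, (fun x => x), (fun x => x).
split; first exact: wo_ltI.
split; first by exists (fun i => if i is Some k then k.+1 else 0) => [[a|] [b|]] //= [->].
split; first by case=> [[|k]|] /=; [right|left|left].
split; first by case=> [k|] /=; [left|right].
split; first by [].
split; first by case=> [a|] //= _; exists (Some a.+1).
split.
  split; first by move=> i j H; apply: (coh HK (kuo i) (kuo j)) => x; apply: espec.
  split; first by move=> i x; apply: uo_inj; apply: espec.
  move=> i j k x H1 H2.
  have H3 : leo ltI i k.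
    case: H1 => [H1|E1]; last by rewrite E1.
    case: H2 => [H2|E2]; last by rewrite -E2; left.
    by left; apply: (proj1 (proj2 wo_ltI)) H2.
  by apply: uo_inj; rewrite (espec _ _ _ H2) (espec _ _ _ H1) (espec _ _ _ H3).
split; first by case=> [k|] /=.
split.
  move=> [[|j]|] Hjb Hlim x //.
    by have [[k|] []] := Hlim (Some j) (ltnSn j) => //= H1 H2; move: (leq_ltn_trans H1 H2); rewrite ltnn.
  have [i [y Hy]] := us x.
  exists (Some i), y; split=> //.
  by rewrite -Hy; exact: (espec (Some i) None y (or_introl I)).
split.
  move=> [a|] [c|] //= Hac Hnb.
  - have Ec : c = a.+1.
      apply/eqP; rewrite eqn_leq Hac andbT; rewrite leqNgt; apply/negP => H.
      by apply: (Hnb (Some a.+1)).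
    subst c.
    have -> : e (Some a) (Some a.+1) = w a.
      apply: funext => x; apply: (kemb_inj HK (ku a.+1)).
      by rewrite uc; exact: (espec (Some a) (Some a.+1) x (or_introl (ltnSn a))).
    exact: Hw.
  - by case: (Hnb (Some a.+1)); split=> //=.
split; first exact: iso_id.
split; first exact: iso_id.
by move=> x; exact: (espec (Some 0) None x (or_introl I)).
Qed.
End Main.

Lemma wo_min (I : Type) (lt : I -> I -> Prop) : well_order lt ->
  forall P : I -> Prop, (exists x, P x) -> exists x, P x /\ forall y, P y -> ~ lt y x.
Proof.
move=> [_ [_ [_ wf]]] P [x Px].
apply: NNPP => nE; move: x Px; apply: (well_founded_ind wf) => x IH Px.
apply: nE; exists x; split=> // y Py lyx; exact: IH y lyx Py.
Qed.

Lemma succ_ex (I : Type) (lt : I -> I -> Prop) (t i : I) : well_order lt -> lt i t ->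
  (forall i, lt i t -> exists k, lt i k /\ lt k t) ->
  exists s, lt i s /\ lt s t /\ (forall k, ~ (lt i k /\ lt k s)) /\
    (forall k, lt i k -> leo lt s k).
Proof.
move=> wo lit lim; have [_ [tr [tot _]]] := wo.
have [s [lis mins]] := wo_min wo (ex_intro (fun j => lt i j) t lit).
have leo_s : forall k, lt i k -> leo lt s k.
  move=> k lik; case: (tot s k) => [H|[E|H]]; [by left|by right|].
  by case: (mins k lik H).
exists s; split=> //; split.
  have [k [lik lkt]] := lim i lit.
  by case: (leo_s k lik) => [H|->] //; apply: tr H lkt.
split=> // k [lik lks]; exact: mins k lik lks.
Qed.

Section Main.
Variables (L : vocab) (K : AECdata L) (HK : AEC_axioms K) (HAP : amalgamation0 K)
  (Hstab : stable0 K) (Hcat : categorical0 K) (Hsat : saturative0 K).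

Lemma preiso (X Y W : structure L) (f : X -> Y) (psi : W -> X) :
  limit_over K f -> inK0 K W -> is_iso psi -> limit_over K (fun x => f (psi x)).
Proof.
move=> [iX [iY [kf [I [lt [N [e [b [t [al [be H]]]]]]]]]]] iW hpsi.
move: H => [wo [c [hb [ht [bt [lim [ch [iN [cont [uni [ial [ibe Eq]]]]]]]]]]]].
split=> //; split=> //; split.
  exact: (kemb_comp HK (iso_kemb HK (proj1 iW) hpsi) kf).
exists I, lt, N, e, b, t, (fun x => al (psi x)), be.
exact: (conj wo (conj c (conj hb (conj ht (conj bt (conj lim (conj ch (conj iN
  (conj cont (conj uni (conj (iso_comp hpsi ial) (conj ibe (fun x => Eq (psi x)))))))))))))).
Qed.

Lemma postiso (X Y Z : structure L) (f : X -> Y) (phi : Y -> Z) :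
  limit_over K f -> inK0 K Z -> is_iso phi -> limit_over K (fun x => phi (f x)).
Proof.
move=> [iX [iY [kf [I [lt [N [e [b [t [al [be H]]]]]]]]]]] iZ hphi.
move: H => [wo [c [hb [ht [bt [lim [ch [iN [cont [uni [ial [ibe Eq]]]]]]]]]]]].
split=> //; split=> //; split.
  exact: (kemb_comp HK kf (iso_kemb HK (proj1 iY) hphi)).
exists I, lt, N, e, b, t, al, (fun y => phi (be y)).
refine (conj wo (conj c (conj hb (conj ht (conj bt (conj lim (conj ch (conj iN
  (conj cont (conj uni (conj ial (conj (iso_comp ibe hphi) _)))))))))))).
by move=> x; rewrite Eq.
Qed.

Lemma lim_into_univ (C D E : structure L) (u : C -> D) (w : D -> E) :
  universal_over K u -> kemb K w -> inK0 K E -> limit_over K (fun x => w (u x)).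
Proof.
move=> [iC [iD [ku Hu]]] kw iE.
have [X [Y [f Hf]]] := limit_ex HK HAP Hstab Hcat.
have [psi hpsi] := proj2 Hcat _ _ iC (proj1 Hf).
have hpre := preiso Hf iC hpsi.
have [iX [iY [kfp _]]] := hpre.
have [h [kh Eh]] := Hu Y _ iY kfp.
have := Hsat iE (kemb_comp HK kh kw) hpre.
have -> // : (fun x => w (h (f (psi x)))) = (fun x => w (u x)).
by apply: funext => x; rewrite Eh.
Qed.
End Main.

Section Step.
Variables (L : vocab) (K : AECdata L) (HK : AEC_axioms K) (HAP : amalgamation0 K)
  (Hstab : stable0 K) (Hcat : categorical0 K) (Hsat : saturative0 K).

Lemma step_lemma (Nn M1 M2 : structure L) (e : Nn -> M1) (s : M1 -> M2) (A : M2 -> Prop) :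
  limit_over K e -> kemb K s -> inK0 K M2 -> (forall x y, A x -> A y -> x = y) ->
  exists (Nn' : structure L) (e' : Nn' -> M2) (tt : Nn -> Nn'),
    limit_over K e' /\ limit_over K tt /\ (forall x, e' (tt x) = s (e x)) /\
    (forall x, A x -> exists z, e' z = x).
Proof.
move=> He ks iM2 Auniq.
have He2 := Hsat iM2 ks He.
have iNn := proj1 He.
case: He2 => [_ [_ [_ [I [lt [P [ep [b [t [al [be H]]]]]]]]]]].
move: H => [wo [_ [hb [ht [bt [lim [ch [iP [cont [uni [ial [ibe Eq]]]]]]]]]]]].
have [ltirr [lttr [lttot wf]]] := wo.
have [kep [ep_id ep_comp]] := ch.
have lbt : lt b t by case: (hb t) => // E; case: bt.
have [k1 [bk1 k1t]] := lim b lbt.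
have kbe : kemb K be := iso_kemb HK (proj1 (iP t)) ibe.
have [k [bk [kt Hk]]] : exists k, lt b k /\ lt k t /\
    forall x, A x -> exists z : P k, be (ep k t z) = x.
  case: (pselect (exists x, A x)) => [[x Ax]|nA]; last first.
    by exists k1; split=> //; split=> // x Ax; case: nA; exists x.
  have [w0 Ew0] := proj2 ibe x.
  have [k0 [z0 [k0t Ez0]]] := cont t (fun E => bt (esym E)) lim w0.
  case: (lttot k0 k1) => [lk|[Ek|lk]].
  - exists k1; split=> //; split=> // x' Ax'; rewrite (Auniq _ _ Ax' Ax).
    exists (ep k0 k1 z0).
    by rewrite (ep_comp _ _ _ _ (or_introl lk) (or_introl k1t)) Ez0 Ew0.
  - subst k0; exists k1; split=> //; split=> // x' Ax'; rewrite (Auniq _ _ Ax' Ax).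
    by exists z0; rewrite Ez0 Ew0.
  - exists k0; split; first exact: (lttr _ _ _ bk1 lk).
    split=> // x' Ax'; rewrite (Auniq _ _ Ax' Ax).
    by exists z0; rewrite Ez0 Ew0.
have [s1 [ks1 [s1t [nb1 _]]]] := succ_ex wo kt lim.
have [s0 [bs0 [s0t [nb0 min0]]]] := succ_ex wo lbt lim.
have U1 : universal_over K (ep k s1) := uni k s1 ks1 nb1.
have U0 : universal_over K (ep b s0) := uni b s0 bs0 nb0.
exists (P k), (fun z => be (ep k t z)), (fun x => ep b k (al x)).
split.
  have := lim_into_univ HK HAP Hstab Hcat Hsat U1
            (kemb_comp HK (kep _ _ (or_introl s1t)) kbe) iM2.
  have -> // : (fun x => be (ep s1 t (ep k s1 x))) = (fun z => be (ep k t z)).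
  by apply: funext => z; rewrite ep_comp //; left.
split.
  have Hs0k : leo lt s0 k := min0 k bk.
  have := lim_into_univ HK HAP Hstab Hcat Hsat U0 (kep _ _ Hs0k) (iP k).
  have -> : (fun x => ep s0 k (ep b s0 x)) = ep b k.
    by apply: funext => x; rewrite ep_comp //; left.
  by move=> Hl; exact: (preiso HK Hl iNn ial).
split; last exact: Hk.
by move=> x; rewrite ep_comp; [exact: Eq|left|left].
Qed.
End Step.

Unset Implicit Arguments.

Lemma pi_inf (j l : nat) : exists i, l <= i /\ i - Nat.sqrt i * Nat.sqrt i = j.
Proof.
exists ((j + l) * (j + l) + j); split; first by nia.
have -> : Nat.sqrt ((j + l) * (j + l) + j) = j + l.
  by apply: Nat.sqrt_unique; split; nia.
by lia.
Qed.

Theorem lemma8p3 (L : vocab) (K : AECdata L)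
  (HK : AEC_axioms K) (HLS : LS_is_aleph0 K) (HAP : amalgamation0 K)
  (HNM : no_maximal0 K) (Hstab : stable0 K) (Hcat : categorical0 K)
  (Hsat : saturative0 K)
  (M : nat -> structure L) (s : forall i, M i -> M i.+1) (Mw : structure L)
  (m : forall i, M i -> Mw) (HM : @omega_chain L K M s Mw m) :
  exists (N : nat -> structure L) (t : forall i, N i -> N i.+1)
         (n : forall i, N i -> Mw) (e : forall i, N i -> M i),
    @omega_chain L K N t Mw n /\
    (forall i (x : N i), m i (e i x) = n i x) /\
    (forall i, limit_over K (e i)) /\
    (forall i, limit_over K (t i)).
Proof.
have [X0 [Y0 [f0 Hf0]]] := limit_ex HK HAP Hstab Hcat.
case: HM => [iM [iMw [ks [km [mc mcov]]]]].
have [phi hphi] := proj2 Hcat _ _ (proj1 (proj2 Hf0)) (iM 0).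
have Hbase := postiso HK Hf0 (iM 0) hphi.
have [gw [gw' gwK gwK']] : exists gw : nat -> Mw, bijective gw by case: iMw.
pose pi (i : nat) := i - Nat.sqrt i * Nat.sqrt i.
pose A i := {Nn : structure L & Nn -> M i}.
pose P i (a : A i) := limit_over K (projT2 a).
pose R i (a : A i) (b : A i.+1) := exists tt : projT1 a -> projT1 b,
  limit_over K tt /\ (forall x, projT2 b (tt x) = s i (projT2 a x)) /\
  (forall x, m i.+1 x = gw (pi i) -> exists z, projT2 b z = x).
have H0 : exists a, P 0 a by exists (existT _ X0 (fun x => phi (f0 x))).
have Hs : forall i a, P i a -> exists b, P i.+1 b /\ R i a b.
  move=> i [Nn e] /= He.
  have uq : forall x y, m i.+1 x = gw (pi i) -> m i.+1 y = gw (pi i) -> x = y.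
    by move=> x y Ex Ey; apply: (kemb_inj HK (km i.+1)); rewrite Ex Ey.
  have [Nn' [e' [tt [He' [Htt [Ecomp Hcov]]]]]] :=
    step_lemma HK HAP Hstab Hcat Hsat He (ks i) (iM i.+1) uq.
  by exists (existT _ Nn' e'); split=> //; exists tt.
have [F HF] := dep_seq H0 Hs.
have [tt Htt] := @dchoice (fun i => projT1 (F i) -> projT1 (F i.+1))
  (fun i tt => limit_over K tt /\ (forall x, projT2 (F i.+1) (tt x) = s i (projT2 (F i) x)) /\
    (forall x, m i.+1 x = gw (pi i) -> exists z, projT2 (F i.+1) z = x))
  (fun i => proj2 (HF i)).
have mup : forall l i, l <= i -> forall x, exists x', m i x' = m l x.
  move=> l i H; rewrite -(subnK H); elim: (i - l) => [|d IH] x; first by exists x.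
  by have [x' Ex'] := IH x; exists (s _ x'); rewrite mc.
exists (fun i => projT1 (F i)), tt, (fun i x => m i (projT2 (F i) x)), (fun i => projT2 (F i)).
split.
  split; first by move=> i; exact: (proj1 (proj1 (HF i))).
  split; first exact: iMw.
  split; first by move=> i; exact: (proj1 (proj2 (proj2 (proj1 (Htt i))))).
  split.
    move=> i; exact: (kemb_comp HK (proj1 (proj2 (proj2 (proj1 (HF i))))) (km i)).
  split; first by move=> i x /=; rewrite (proj1 (proj2 (Htt i))) mc.
  move=> y; rewrite -(gwK' y); set j := gw' y.
  have [l [x Hx]] := mcov (gw j).
  have [i [li pij]] := pi_inf j l.
  have [x' Ex'] := mup l i.+1 (leqW li) x.
  have Ex'' : m i.+1 x' = gw (pi i) by rewrite Ex' Hx /pi pij.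
  have [z Hz] := proj2 (proj2 (Htt i)) x' Ex''.
  by exists i.+1, z => /=; rewrite Hz Ex'.
split; first by [].
split; first by move=> i; exact: (proj1 (HF i)).
by move=> i; exact: (proj1 (Htt i)).
Qed.
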